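(* Let $f:\mathbb{R}^n\to\mathbb{R}$ be bounded below, let $\mathcal{X}\subseteq\mathbb{R}^n$ be a set such that $\min_{\mathbf{x}}\{f(\mathbf{x}) : \mathbf{x}\in\mathcal{X}\}$ has an optimal solution, and let $p_f$ be any probability distribution whose support is $\mathcal{X}$. Let $(G^*, D^*_{G^*})$ be the globally optimal generator/discriminator pair for a GAN trained on $\mathbf{x}\sim p_f$, so that $D^*_{G^*}(\mathbf{x}) = \tfrac12$ if $p_f(\mathbf{x})>0$ and $D^*_{G^*}(\mathbf{x})=0$ if $p_f(\mathbf{x})=0$. Then for any $\lambda>0$ and any $\delta$, the problems $$\min_{\mathbf{x}}\Big\{ f(\mathbf{x}) + \lambda\big(\delta - \log D^*_{G^*}(\mathbf{x})\big)\Big\}\quad\text{and}\quad \min_{\mathbf{x}}\{f(\mathbf{x}) : \mathbf{x}\in\mathcal{X}\}$$ have the same optimal solutions.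
   Context: A GAN consists of a generator $G$ (mapping latent samples $\mathbf{z}\sim p_z$ to outputs with distribution $p_g$) and a discriminator $D$ with values in $[0,1]$, trained on the min–max loss $\min_G\max_D\{\mathbb{E}_{p_f}[\log D(\mathbf{x})] + \mathbb{E}_{p_z}[\log(1-D(G(\mathbf{z})))]\}$; a globally optimal pair solves this min–max problem. The convention $-\log 0 = +\infty$ is used. *)

(* Defs.v *)
From mathcomp Require Import all_boot all_order all_algebra.
From mathcomp Require Import all_classical all_reals all_analysis.
Set Implicit Arguments. Unset Strict Implicit. Unset Printing Implicit Defensive.
Import Order.TTheory GRing.Theory Num.Theory.
Local Open Scope classical_set_scope.
Local Open Scope ring_scope.

Definition neglog {R : realType} (d : R) : \bar R :=
  if 0 < d then (- ln d)%:E else +oo%E.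

Definition is_minimizer {T : Type} {R : realType} (g : T -> \bar R) (x : T) : Prop :=
  forall y, (g x <= g y)%E.

Definition is_constrained_minimizer {T : Type} {R : realType}
  (f : T -> R) (X : set T) (x : T) : Prop :=
  X x /\ forall y, X y -> f x <= f y.

Definition gan_penalized {T : Type} {R : realType} (f : T -> R) (D : T -> R)
  (lam delta : R) (x : T) : \bar R :=
  ((f x)%:E + lam%:E * (delta%:E + neglog (D x)))%E.

(* Main.v *)
Require Import Defs.
From mathcomp Require Import all_boot all_order all_algebra.
From mathcomp Require Import all_classical all_reals all_analysis.
Import Order.TTheory GRing.Theory Num.Theory.
Local Open Scope classical_set_scope.
Local Open Scope ring_scope.

Theorem corollary1 (R : realType) (n : nat) (f : 'rV[R]_n -> R)
  (X : set 'rV[R]_n) (p_f : 'rV[R]_n -> R) (Dstar : 'rV[R]_n -> R) :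
  (exists m : R, forall x, m <= f x) ->
  (exists x, is_constrained_minimizer f X x) ->
  (forall x, 0 <= p_f x) ->
  X = [set x | 0 < p_f x] ->
  (forall x, 0 < p_f x -> Dstar x = 2^-1) ->
  (forall x, p_f x = 0 -> Dstar x = 0) ->
  forall lam delta : R, 0 < lam ->
  forall x, is_minimizer (gan_penalized f Dstar lam delta) x <->
            is_constrained_minimizer f X x.
Proof.
move=> _ [x0 [Xx0 _]] p0 XE Dp D0 lam delta lam0; rewrite XE in Xx0 *.
set c := lam * (delta + - ln (2^-1 : R)).
have gin : forall x, 0 < p_f x -> gan_penalized f Dstar lam delta x = (f x + c)%:E.
  move=> x px; rewrite /gan_penalized /neglog Dp // invr_gt0 ltr0n /=.
  by rewrite /c.
have gout : forall x, ~ (0 < p_f x) -> gan_penalized f Dstar lam delta x = +oo%E.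
  move=> x px.
  have : p_f x = 0.
    by move: (p0 x); rewrite le_eqVlt => /orP[/eqP<-//|/px].
  move=> /D0 Dx; rewrite /gan_penalized /neglog Dx ltxx /=.
  by rewrite addey // mulry gtr0_sg // mul1e addey.
move=> x; split.
- move=> Hm.
  have Xx : 0 < p_f x.
    apply/negPn/negP => /negP nx.
    have := Hm x0; rewrite gout // (gin _ Xx0).
    by rewrite leNgt ltey.
  split => // y Xy /=.
  have := Hm y; rewrite gin // gin // lee_fin => H.
  by rewrite -(lerD2r c).
- move=> [Xx Hx] y.
  have [py|npy] := pselect (0 < p_f y).
    by rewrite gin // gin // lee_fin lerD2r; apply: Hx.
  by rewrite (gout y npy) leey.
Qed.
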